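(* Let $d>1$. For every integer $s$ with $2\le s\le 2^d$, \[\lambda^*(d,s)\le \left(\frac{s}{s-1}\right)^{s-1}\lambda^*(d,s-1)\le e\,\lambda^*(d,s-1),\] and for every integer $s$ with $0\le s\le 2^d-2$, \[\lambda^*(d,s)\le \left(\frac{2^d-s}{2^d-s-1}\right)^{2^d-s-1}\lambda^*(d,s+1)\le e\,\lambda^*(d,s+1).\]
   Context: For integers $n\ge d\ge 1$, a $d$-flat in $\mathbb{F}_2^n$ is a set $x_0+U$ with $x_0\in\mathbb{F}_2^n$ and $U$ a $d$-dimensional linear subspace of $\mathbb{F}_2^n$. For $A\subseteq\mathbb{F}_2^n$ and an integer $0\le s\le 2^d$, $\lambda^*(n,d,s,A)$ denotes the fraction of $d$-flats $Q$ in $\mathbb{F}_2^n$ with $|Q\cap A|=s$. Let $\lambda^*(n,d,s)=\max_{A\subseteq\mathbb{F}_2^n}\lambda^*(n,d,s,A)$; this is non-increasing in $n$, and $\lambda^*(d,s)=\lim_{n\to\infty}\lambda^*(n,d,s)$. *)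

(* Defs.v *)
From HB Require Import structures.
From mathcomp Require Import all_boot all_order all_algebra.
From mathcomp Require Import all_classical all_reals all_analysis.
Set Implicit Arguments. Unset Strict Implicit. Unset Printing Implicit Defensive.
Import Order.TTheory GRing.Theory Num.Theory numFieldNormedType.Exports.
Local Open Scope ring_scope.

Definition is_flat (n d : nat) (Q : {set 'rV['F_2]_n}) : bool :=
  [exists x0 : 'rV['F_2]_n, exists U : 'M['F_2]_(d, n),
     (\rank U == d) && (Q == [set x | (x - x0 <= U)%MS])].

Definition flats (n d : nat) : {set {set 'rV['F_2]_n}} := [set Q | is_flat d Q].

Definition lamA (R : realType) (n d s : nat) (A : {set 'rV['F_2]_n}) : R :=
  (#|[set Q in flats n d | #|Q :&: A| == s]|)%:R / (#|flats n d|)%:R.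

Definition lamN (R : realType) (n d s : nat) : R :=
  \big[Num.max/0]_(A : {set 'rV['F_2]_n}) lamA R d s A.

Definition lam (R : realType) (d s : nat) : R := limn (fun n => lamN R n d s).

(* Main.v *)
Require Import Defs.
From HB Require Import structures.
From mathcomp Require Import all_boot all_order all_algebra.
From mathcomp Require Import all_classical all_reals all_analysis.
From mathcomp Require Import zify ring lra.
Import Order.TTheory GRing.Theory Num.Theory numFieldNormedType.Exports.
Local Open Scope ring_scope.
Set Implicit Arguments. Unset Strict Implicit. Unset Printing Implicit Defensive.

Lemma card_F2 : #|'F_2| = 2%N.
Proof. by rewrite card_Fp. Qed.

Lemma card_subsp m n (K : 'M['F_2]_(m, n)) :
  #|[set x : 'rV['F_2]_n | (x <= K)%MS]| = (2 ^ \rank K)%N.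
Proof.
pose f := fun u : 'rV['F_2]_(\rank K) => u *m row_base K.
have inj_f : injective f by apply: (can_inj (mulmxKp (row_base_free K))).
have -> : [set x : 'rV['F_2]_n | (x <= K)%MS] = f @: [set: 'rV['F_2]_(\rank K)].
  apply/setP => x; rewrite inE; apply/idP/imsetP.
    rewrite -(eq_row_base K) => /submxP [u ->]; by exists u; rewrite ?in_setT.
  by move=> [u _ ->]; rewrite /f -(eq_row_base K) submxMl.
by rewrite card_imset // cardsT card_mx card_F2 mul1n.
Qed.

Definition flat_of n m (x0 : 'rV['F_2]_n) (U : 'M['F_2]_(m, n)) :=
  [set x | (x - x0 <= U)%MS].

Lemma card_flat_of n m (x0 : 'rV['F_2]_n) (U : 'M['F_2]_(m, n)) :
  #|flat_of x0 U| = (2 ^ \rank U)%N.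
Proof.
rewrite -card_subsp.
have -> : flat_of x0 U = (fun x => x + x0) @: [set x : 'rV['F_2]_n | (x <= U)%MS].
  apply/setP => x; rewrite inE; apply/idP/imsetP.
    by move=> h; exists (x - x0); rewrite ?inE // subrK.
  by move=> [y]; rewrite inE => hy ->; rewrite addrK.
by rewrite card_imset //; apply: addIr.
Qed.

Lemma flatsP n d (Q : {set 'rV['F_2]_n}) :
  reflect (exists x0 (U : 'M['F_2]_(d, n)), \rank U = d /\ Q = flat_of x0 U)
          (Q \in flats n d).
Proof.
rewrite inE /is_flat; apply: (iffP existsP) => [[x0 /existsP [U /andP [/eqP hr /eqP ->]]]|].
  by exists x0, U.
by move=> [x0 [U [hr ->]]]; exists x0; apply/existsP; exists U; rewrite hr eqxx /=; exact/eqP.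
Qed.

Lemma card_flat n d Q : Q \in flats n d -> #|Q| = (2 ^ d)%N.
Proof. by move=> /flatsP [x0 [U [hr ->]]]; rewrite card_flat_of hr. Qed.

Lemma lamA_compl (R : realType) n d s (A : {set 'rV['F_2]_n}) : (s <= 2 ^ d)%N ->
  lamA R d s A = lamA R d (2 ^ d - s) (~: A).
Proof.
move=> hs; rewrite /lamA; congr (_%:R / _); apply: eq_card => Q; rewrite !inE.
case hQ: (is_flat d Q) => //=.
have cQ : #|Q| = (2 ^ d)%N by apply: card_flat; rewrite inE.
have : (#|Q :&: A| <= 2 ^ d)%N by rewrite -cQ subset_leq_card // subsetIl.
rewrite -finset.setDE cardsD cQ; move: hs; set X := (2 ^ d)%N => hs h; clearbody X; move: hs h; move: (#|Q :&: A|) => k hs h; apply/eqP/eqP; lia.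
Qed.

Lemma lamN_compl (R : realType) n d s : (s <= 2 ^ d)%N ->
  lamN R n d s = lamN R n d (2 ^ d - s).
Proof.
move=> hs; rewrite /lamN (reindex_inj (@finset.setC_inj _)) /=.
by apply: eq_bigr => A _; rewrite (lamA_compl R _ hs) finset.setCK.
Qed.

Lemma lam_compl (R : realType) d s : (s <= 2 ^ d)%N ->
  lam R d s = lam R d (2 ^ d - s).
Proof.
move=> hs; rewrite /lam; suff -> : (fun n => lamN R n d s) = (fun n => lamN R n d (2 ^ d - s)) by [].
by apply: funext => n; rewrite lamN_compl.
Qed.
Section Removal.
Variables (R : realType) (T : finType).
Implicit Types (A B Q S C : {set T}) (p : R).

Definition wt p A B : R :=
  \prod_x (if x \in B then (if x \in A then p else 0)
           else (if x \in A then 1 - p else 1)).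

Lemma wt_ge0 p A B : 0 <= p <= 1 -> 0 <= wt p A B.
Proof.
move=> /andP [p0 p1]; apply: prodr_ge0 => x _.
by do 2 case: ifP => _ //; rewrite subr_ge0.
Qed.

Lemma wt_sum p A : \sum_B wt p A B = 1.
Proof.
rewrite /wt.
have := (@bigA_distr R 0 1 *%R +%R T (fun x => if x \in A then p else 0)
   (fun x => if x \in A then 1 - p else 1)).
move=> <-; apply: big1 => x _; by case: ifP => _ /=; rewrite ?add0r // subrKC.
Qed.


Lemma prod_ifC C y (a b : R) : y \notin C ->
  \prod_x (if x \in C then a else if x == y then b else 1) = a ^+ #|C| * b.
Proof.
move=> yC; rewrite (bigID (mem C)) /=.
rewrite (eq_bigr (fun _ => a)); last by move=> x ->.
rewrite prodr_const; congr (_ * _).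
rewrite (bigD1 y) //= (negbTE yC) eqxx big1 ?mulr1 //.
by move=> x /andP [/negbTE -> /negbTE ->].
Qed.

Lemma ind_sum p A Q y : y \in Q :&: A ->
  \sum_B wt p A B * ((Q :&: B) == ((Q :&: A) :\ y))%:R
  = p ^+ #|(Q :&: A) :\ y| * (1 - p).
Proof.
move=> yS; set S := Q :&: A.
pose F' x := if (x \in Q) && (x \notin S :\ y) then 0 else (if x \in A then p else 0).
pose G' x := if (x \in Q) && (x \in S :\ y) then 0 else (if x \in A then 1 - p else 1).
transitivity (\sum_(B : {set T}) \prod_(x : T) (if x \in B then F' x else G' x)).
  apply: eq_bigr => B _; rewrite /wt.
  case: (boolP (Q :&: B == S :\ y)) => [/eqP e | ne].
    rewrite mulr1; apply: eq_bigr => x _.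
    have hx : x \in Q -> (x \in B) = (x \in S :\ y) by move=> xQ; rewrite -e inE xQ.
    rewrite /F' /G'; case: (boolP (x \in Q)) => xQ /=; last by [].
    by rewrite -hx //; case: (x \in B).
  rewrite mulr0n mulr0; symmetry.
  have [x hx] : exists x, (x \in Q :&: B) != (x \in S :\ y).
    apply/existsP; apply: contraR ne => /existsPn h; apply/eqP/setP => z.
    exact/eqP/negPn/h.
  rewrite (bigD1 x) //=; apply/eqP; rewrite mulf_eq0; apply/orP; left; apply/eqP.
  move: hx; rewrite /F' /G' /S !inE; case: (x \in Q) => //=;
  by rewrite ?andbF; case: (x \in B); case: (x != y); case: (x \in A).
transitivity (\prod_(x : T) (F' x + G' x)).
  by rewrite (@bigA_distr R 0 1 *%R +%R T F' G'); apply: eq_bigl.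
have yQ : y \in Q by move: yS; rewrite inE => /andP [].
have yA : y \in A by move: yS; rewrite inE => /andP [].
rewrite -(@prod_ifC (S :\ y) y p (1 - p)) ?setD11 //.
apply: eq_bigr => x _; rewrite /F' /G' /S !inE /=.
case: eqP => [-> | _] /=; first by rewrite yQ yA /= add0r.
case: (x \in Q); case: (x \in A) => /=; by rewrite ?add0r ?addr0 ?subrKC.
Qed.

Lemma inner_lb p A Q t : 0 <= p <= 1 -> #|Q :&: A| = t.+1 ->
  t.+1%:R * (p ^+ t * (1 - p)) <= \sum_B wt p A B * (#|Q :&: B| == t)%:R.
Proof.
move=> p01 hc; set S := Q :&: A.
have step : forall B, \sum_(y in S) ((Q :&: B) == (S :\ y))%:R
                      <= ((#|Q :&: B| == t)%:R : R).
  move=> B.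
  case: (pickP (fun y => (y \in S) && (Q :&: B == S :\ y))) =>
      [y0 /andP [y0S /eqP e] | none].
    have ct' : #|S :\ y0| = t.
      by move: hc; rewrite -/S (cardsD1 y0) y0S add1n => -[].
    rewrite e ct' eqxx (bigD1 y0) //= eqxx big1 ?addr0 //.
    move=> y /andP [yS ny]; apply/eqP; rewrite pnatr_eq0 eqb0.
    apply: contra ny => /eqP h.
    by have := setD11 y0 S; rewrite h in_setD1 y0S andbT => /negbFE /eqP ->.
  rewrite big1 ?ler0n // => y yS.
  by have := none y; rewrite yS /= => -> /=; rewrite mulr0n.
have cS : #|S| = t.+1 by [].
have -> : t.+1%:R * (p ^+ t * (1 - p)) =
          \sum_(y in S) \sum_B wt p A B * ((Q :&: B) == (S :\ y))%:R.
  rewrite (eq_bigr (fun _ => p ^+ t * (1 - p))).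
    by rewrite sumr_const cS mulr_natl.
  move=> y yS; rewrite ind_sum //.
  by move: hc; rewrite -/S (cardsD1 y) yS add1n => -[->].
rewrite exchange_big /=; apply: ler_sum => B _.
rewrite -mulr_sumr; apply: ler_wpM2l; first exact: wt_ge0.
exact: step.
Qed.

Lemma card_sumR (F : {set {set T}}) (P : pred {set T}) :
  (#|[set Q in F | P Q]|%:R : R) = \sum_(Q in F) (P Q)%:R.
Proof.
rewrite -sum1_card natr_sum [RHS]big_mkcond [LHS]big_mkcond.
by apply: eq_bigr => Q _; rewrite !inE; case: (Q \in F); case: (P Q).
Qed.

Lemma removal (F : {set {set T}}) A t p : 0 <= p <= 1 ->
  (#|[set Q in F | #|Q :&: A| == t.+1]|)%:R * (t.+1%:R * (p ^+ t * (1 - p)))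
  <= \sum_B wt p A B * (#|[set Q in F | #|Q :&: B| == t]|)%:R.
Proof.
move=> p01.
under [X in _ <= X]eq_bigr => B _ do rewrite card_sumR mulr_sumr.
rewrite exchange_big /= card_sumR mulr_suml.
apply: ler_sum => Q QF.
case: (boolP (#|Q :&: A| == t.+1)) => [/eqP h | _].
  by rewrite mulr1n mul1r; apply: inner_lb.
rewrite mulr0n mul0r; apply: sumr_ge0 => B _; apply: mulr_ge0.
  exact: wt_ge0.
exact: ler0n.
Qed.
End Removal.

Lemma lamN_ge0 (R : realType) n d s : 0 <= lamN R n d s.
Proof. exact: bigmax_ge_id. Qed.

Lemma lamA_le (R : realType) n d s (A : {set 'rV['F_2]_n}) :
  lamA R d s A <= lamN R n d s.
Proof. exact: le_bigmax. Qed.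

Lemma lamA_ge0 (R : realType) n d s (A : {set 'rV['F_2]_n}) : 0 <= lamA R d s A.
Proof. by rewrite /lamA divr_ge0 ?ler0n. Qed.

Lemma lamN_step (R : realType) n d t : (0 < t)%N ->
  lamN R n d t.+1 <= (t.+1%:R / t%:R) ^+ t * lamN R n d t.
Proof.
move=> ht; set L := lamN R n d t.
pose p : R := t%:R / t.+1%:R.
have p0 : 0 < p by rewrite /p divr_gt0 ?ltr0n.
have p01 : 0 <= p <= 1.
  by rewrite ltW //= /p ler_pdivrMr ?ltr0n // mul1r ler_nat.
have hc : t.+1%:R * (p ^+ t * (1 - p)) = p ^+ t by rewrite /p; field.
have key : forall A : {set 'rV['F_2]_n}, lamA R d t.+1 A * p ^+ t <= L.
  move=> A; rewrite /lamA.
  set N := #|flats n d|.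
  case: (posnP N) => [-> | Npos].
    by rewrite invr0 mulr0 mul0r lamN_ge0.
  have NR : 0 < (N%:R : R) by rewrite ltr0n.
  rewrite mulrAC ler_pdivrMr // -hc.
apply: le_trans (removal (flats n d) A t p01) _.
  apply: (@le_trans _ _ (\sum_B wt p A B * (L * N%:R))).
    apply: ler_sum => B _; rewrite ler_wpM2l ?wt_ge0 //.
    by have := lamA_le R d t B; rewrite /lamA -/N -/L ler_pdivrMr.
  by rewrite -mulr_suml wt_sum mul1r.
have e : t.+1%:R / t%:R = p^-1 by rewrite /p invf_div.
rewrite /lamN; apply: bigmax_le => [|A _].
  by rewrite mulr_ge0 ?lamN_ge0 // exprn_ge0 // divr_ge0 ?ler0n.
rewrite e exprVn mulrC ler_pdivlMr ?exprn_gt0 //; exact: key.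
Qed.

Definition hyp n (a : 'rV['F_2]_n) (b : 'F_2) : {set 'rV['F_2]_n} :=
  [set x | x *m a^T == b%:M].

Lemma sub_hyp n m (x0 : 'rV['F_2]_n) (U : 'M['F_2]_(m, n)) a b :
  (flat_of x0 U \subset hyp a b) = (U *m a^T == 0) && (x0 *m a^T == b%:M).
Proof.
apply/fintype.subsetP/andP => [h | [/eqP hU /eqP hx]].
  have hx : x0 *m a^T = b%:M.
    by have := h x0; rewrite !inE subrr sub0mx => /(_ isT) /eqP.
  split; last by rewrite hx.
  apply/eqP/row_matrixP => i; rewrite row0 row_mul.
  have := h (x0 + row i U); rewrite !inE [x0 + _]addrC addrK row_sub => /(_ isT) /eqP.
  rewrite mulmxDl hx => e; apply: (@addIr _ (b%:M)); by rewrite e add0r.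
move=> x; rewrite !inE => /submxP [D e].
have -> : x = D *m U + x0 by rewrite -e subrK.
by rewrite mulmxDl -mulmxA hU mulmx0 add0r hx.
Qed.

Lemma sum_nat_bool (T : finType) (P : pred T) :
  (\sum_x (P x : nat))%N = #|[set x | P x]|.
Proof.
rewrite -sum1_card [RHS]big_mkcond /=; apply: eq_bigr => x _; rewrite inE.
by case: (P x).
Qed.

Lemma scalar_eq11 (b : 'F_2) (M : 'M['F_2]_1) : (b%:M == M) = (b == M 0 0).
Proof.
apply/eqP/eqP => [<- | ->]; first by rewrite mxE eqxx mulr1n.
by rewrite -mx11_scalar.
Qed.

Lemma hyp_count n d Q : Q \in flats n.+1 d ->
  (\sum_(a : 'rV['F_2]_n.+1 | a != 0%R) \sum_(b : 'F_2) (Q \subset hyp a b : nat))%N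
  = (2 ^ (n.+1 - d)).-1.
Proof.
case/flatsP => x0 [U [hr ->]].
have e1 : forall a : 'rV['F_2]_n.+1,
    (\sum_(b : 'F_2) (flat_of x0 U \subset hyp a b : nat))%N = (U *m a^T == 0).
  move=> a; rewrite (bigD1 ((x0 *m a^T) 0 0)) //= sub_hyp [x0 *m _ == _]eq_sym scalar_eq11 eqxx andbT.
  rewrite big1 ?addn0 // => b hb; rewrite sub_hyp [x0 *m _ == _]eq_sym scalar_eq11.
  by rewrite (negbTE hb) andbF.
under eq_bigr => a _ do rewrite e1.
have tot : (\sum_(a : 'rV['F_2]_n.+1) ((U *m a^T == 0%R) : nat))%N = (2 ^ (n.+1 - d))%N.
  rewrite sum_nat_bool.
  have -> : [set a : 'rV['F_2]_n.+1 | U *m a^T == 0] = [set a | (a <= kermx U^T)%MS].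
    apply/setP => a; rewrite !inE sub_kermx -(inj_eq (@trmx_inj _ _ _)).
    by rewrite trmx_mul trmxK trmx0.
  by rewrite card_subsp mxrank_ker mxrank_tr hr.
move: tot; rewrite (bigD1 0) //= trmx0 mulmx0 eqxx => <-.
by rewrite add1n.
Qed.

Lemma imset_flat n r (M : 'M['F_2]_(r, n)) b m (y0 : 'rV['F_2]_r) (D : 'M['F_2]_(m, r)) :
  row_free M ->
  (fun y => y *m M + b) @: flat_of y0 D = flat_of (y0 *m M + b) (D *m M).
Proof.
move=> fM; apply/setP => x; rewrite [RHS]inE; apply/imsetP/idP.
  move=> [y]; rewrite inE => hy ->.
  rewrite [X in (X <= _)%MS](_ : _ = (y - y0) *m M) ?submxMr //.
  by rewrite mulmxBl opprD addrACA subrr addr0.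
move=> h.
have hM : (x - (y0 *m M + b) <= M)%MS := submx_trans h (submxMl D M).
set z := (x - (y0 *m M + b)) *m pinvmx M.
have ez : z *m M = x - (y0 *m M + b) := mulmxKpV hM.
exists (y0 + z).
  by rewrite inE [y0 + z]addrC addrK -(submxMfree _ _ fM) ez.
by rewrite mulmxDl ez addrCA opprD addNKr subrK.
Qed.

Lemma hyp_bij n d r (M : 'M['F_2]_(r, n)) b (a : 'rV['F_2]_n) be :
  row_free M -> (forall x : 'rV['F_2]_n, (x <= M)%MS = (x *m a^T == 0)) ->
  b *m a^T = be%:M ->
  forall P : pred {set 'rV['F_2]_n},
  #|[set Q in flats n d | (Q \subset hyp a be) && P Q]| =
  #|[set Q' in flats r d | P ((fun y => y *m M + b) @: Q')]|.
Proof.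
move=> fM hMa hb P.
set psi := fun y : 'rV['F_2]_r => y *m M + b.
have inj_psi : injective psi.
  by move=> y1 y2 /addIr; apply: (can_inj (mulmxKp fM)).
have hz : forall m (X : 'M['F_2]_(m, n)), (X <= M)%MS -> X *m a^T = 0.
  move=> m X hX; apply/row_matrixP => i; rewrite row_mul row0; apply/eqP.
  by rewrite -hMa; apply: submx_trans (row_sub i X) hX.
rewrite -(card_imset _ (imset_inj inj_psi)).
apply: eq_card => Q; rewrite inE; apply/andP/imsetP.
  move=> [/flatsP [x0 [U [hU ->]]] /andP [hsub hP]].
  move: hsub; rewrite sub_hyp => /andP [/eqP hUa /eqP hxa].
  have hx0 : (x0 - b <= M)%MS by rewrite hMa mulmxBl hxa hb subrr.
  have hUM : (U <= M)%MS.
    by apply/row_subP => i; rewrite hMa -row_mul hUa row0.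
  set D := U *m pinvmx M; set y0 := (x0 - b) *m pinvmx M.
  have eD : D *m M = U := mulmxKpV hUM.
  have ey : y0 *m M = x0 - b := mulmxKpV hx0.
  have eQ : psi @: flat_of y0 D = flat_of x0 U by rewrite imset_flat // eD ey subrK.
  exists (flat_of y0 D); last by rewrite eQ.
  rewrite inE; apply/andP; split; last by rewrite eQ.
  apply/flatsP; exists y0, D; split => //.
  by rewrite -[RHS]hU -eD (mxrankMfree _ fM).
move=> [Q']; rewrite inE => /andP [/flatsP [y0 [D [hD ->]]] hP] ->.
split.
  apply/flatsP; exists (y0 *m M + b), (D *m M); split; last by rewrite imset_flat.
  by rewrite mxrankMfree.
apply/andP; split => //.
rewrite imset_flat // sub_hyp hz ?submxMl //= mulmxDl hz ?submxMl // add0r hb.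
by rewrite !eqxx.
Qed.

Lemma hyp_setup n (a : 'rV['F_2]_n.+1) be : a != 0 ->
  exists K : 'M['F_2]_n.+1, exists b : 'rV['F_2]_n.+1,
    [/\ \rank K = n, (forall x : 'rV['F_2]_n.+1, (x <= row_base K)%MS = (x *m a^T == 0))
      & b *m a^T = be%:M].
Proof.
move=> ha; exists (kermx a^T).
have [i hi] : exists i, a 0 i != 0.
  case: (pickP (fun i => a 0 i != 0)) => [i hi | h0]; first by exists i.
  case/negP: ha; apply/eqP/rowP => j; rewrite mxE.
  by have := h0 j; move/negbFE/eqP.
exists ((be / a 0 i) *: delta_mx 0 i); split.
- by rewrite mxrank_ker mxrank_tr rank_rV ha subn1.
- by move=> x; rewrite (eq_row_base (kermx a^T)) sub_kermx.
rewrite [LHS]mx11_scalar -scalemxAl -rowE !mxE mulfVK //.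
Qed.

Lemma hyp_card_eq n d (a : 'rV['F_2]_n.+1) be : a != 0 ->
  #|[set Q in flats n.+1 d | (Q \subset hyp a be) && true]| = #|flats n d|.
Proof.
case/(hyp_setup be) => K [b [hK hMa hb]].
rewrite (hyp_bij d (row_base_free K) hMa hb).
have -> : [set Q' in flats (\rank K) d | true] = flats (\rank K) d.
  by apply/setP => Q; rewrite inE andbT.
by rewrite hK.
Qed.

Lemma hyp_cnt_le (R : realType) n d s (a : 'rV['F_2]_n.+1) be
    (A : {set 'rV['F_2]_n.+1}) : a != 0 ->
  (#|[set Q in flats n.+1 d | (Q \subset hyp a be) && (#|Q :&: A| == s)]|%:R : R)
  <= #|flats n d|%:R * lamN R n d s.
Proof.
case/(hyp_setup be) => K [b [hK hMa hb]].
rewrite (hyp_bij d (row_base_free K) hMa hb).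
set psi := fun y : 'rV['F_2]_(\rank K) => y *m row_base K + b.
have inj_psi : injective psi.
  by move=> y1 y2 /addIr; apply: (can_inj (mulmxKp (row_base_free K))).
have -> : [set Q' in flats (\rank K) d | #|psi @: Q' :&: A| == s] =
          [set Q' in flats (\rank K) d | #|Q' :&: psi @^-1: A| == s].
  apply/setP => Q'; rewrite !inE; congr (_ && (_ == s)).
  rewrite -(card_imset _ inj_psi); apply: eq_card => x.
  apply/idP/idP.
    rewrite inE => /andP [/imsetP [y yQ ->] yA].
    by apply/imsetP; exists y => //; rewrite !inE yQ.
  move=> /imsetP [y]; rewrite !inE => /andP [yQ yA] ->.
  by rewrite yA andbT; apply/imsetP; exists y.
have hk : (#|[set Q' in flats (\rank K) d | #|Q' :&: psi @^-1: A| == s]|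
           <= #|flats (\rank K) d|)%N.
  by apply: subset_leq_card; apply/fintype.subsetP => Q; rewrite inE => /andP [].
have := lamA_le R d s (psi @^-1: A); rewrite /lamA.
move: hk; move: (#|[set Q' in flats (\rank K) d | _]|) => k; rewrite hK => hk.
case: (posnP #|flats n d|) => [N0 | Npos].
  by move: hk; rewrite N0 leqn0 => /eqP ->; rewrite !mul0r.
by rewrite ler_pdivrMr ?ltr0n // mulrC.
Qed.

Lemma card_sumN (T : finType) (F : {set T}) (C : pred T) :
  #|[set Q in F | C Q]| = (\sum_(Q in F) (C Q : nat))%N.
Proof.
rewrite -sum1_card [RHS]big_mkcond [LHS]big_mkcond /=; apply: eq_bigr => Q _.
by rewrite !inE; case: (Q \in F); case: (C Q).
Qed.

Lemma double_count n d (P : pred {set 'rV['F_2]_n.+1}) :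
  (\sum_(a : 'rV['F_2]_n.+1 | a != 0%R) \sum_(b : 'F_2)
     #|[set Q in flats n.+1 d | (Q \subset hyp a b) && P Q]|)%N
  = ((2 ^ (n.+1 - d)).-1 * #|[set Q in flats n.+1 d | P Q]|)%N.
Proof.
under eq_bigr => a _ do under eq_bigr => b _ do rewrite card_sumN.
rewrite card_sumN big_distrr /=.
under eq_bigr => a _ do rewrite exchange_big /=.
rewrite exchange_big /=; apply: eq_bigr => Q QF.
case: (boolP (P Q)) => hP.
  under eq_bigr => a _ do under eq_bigr => b _ do rewrite andbT.
  by rewrite (hyp_count QF) muln1.
rewrite muln0 big1 // => a _; rewrite big1 // => b _.
by rewrite andbF.
Qed.

Lemma lamN_mono (R : realType) n d s : (d <= n)%N ->
  lamN R n.+1 d s <= lamN R n d s.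
Proof.
move=> hdn; set L := lamN R n d s.
rewrite /lamN; apply: bigmax_le => [|A _]; first exact: lamN_ge0.
rewrite /lamA.
have e1 := @double_count n d (fun Q => #|Q :&: A| == s).
have e2 := @double_count n d (fun Q => true).
move: e1 e2 => /= e1 e2.
have eF : [set Q in flats n.+1 d | true] = flats n.+1 d.
  by apply/setP => Q; rewrite inE andbT.
rewrite eF in e2.
set c := (2 ^ (n.+1 - d)).-1 in e1 e2 *.
have cpos : (0 < c)%N.
  have : (2 <= 2 ^ (n.+1 - d))%N.
    by rewrite -{1}(expn1 2) leq_pexp2l // subn_gt0 ltnS.
  by rewrite /c; case: (2 ^ _)%N => // -[].
have key : (c%:R * #|[set Q in flats n.+1 d | #|Q :&: A| == s]|%:R : R)
           <= (c * #|flats n.+1 d|)%:R * L.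
  rewrite -natrM -e1 -e2 !natr_sum mulr_suml.
  apply: ler_sum => a ha; rewrite !natr_sum mulr_suml; apply: ler_sum => b _.
  by rewrite hyp_card_eq // hyp_cnt_le.
set N' := #|flats n.+1 d|; set k := #|[set Q in _ | _]| in key *.
case: (posnP N') => [-> | Npos]; first by rewrite invr0 mulr0 lamN_ge0.
rewrite ler_pdivrMr ?ltr0n // mulrC.
by rewrite natrM -mulrA ler_pM2l ?ltr0n // in key.
Qed.

Section Limits.
Local Open Scope classical_set_scope.
Local Open Scope ring_scope.
Lemma lamN_cvg (R : realType) d s : exists l : R, (fun n => lamN R n d s) @ \oo --> l.
Proof.
set u := fun n => lamN R n d s.
have h : nonincreasing_seq (fun n => u (n + d)%N).
  apply/nonincreasing_seqP => n; rewrite /u addSn; apply: lamN_mono.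
  by rewrite leq_addl.
have lb : has_lbound (range (fun n => u (n + d)%N)).
  by exists 0 => _ [m _ <-]; apply: lamN_ge0.
exists (inf ((fun n => u (n + d)%N) @` setT)).
rewrite -(cvg_shiftn d); exact: nonincreasing_cvgn.
Qed.

Lemma lam_ge0 (R : realType) d s : 0 <= lam R d s.
Proof.
have [a ha] := lamN_cvg R d s.
rewrite /lam (cvg_lim _ ha) //.
apply: (ler_cvg_to (cvg_cst 0) ha); apply: nearW => n; exact: lamN_ge0.
Qed.

Lemma lam_le (R : realType) d s s' (k : R) :
  (forall n, lamN R n d s <= k * lamN R n d s') -> lam R d s <= k * lam R d s'.
Proof.
move=> h.
have [a ha] := lamN_cvg R d s; have [b hb] := lamN_cvg R d s'.
rewrite /lam (cvg_lim _ ha) // (cvg_lim _ hb) //.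
apply: (ler_cvg_to ha (cvgMl_tmp (a:=k) hb)); apply: nearW => n; exact: h.
Qed.

Lemma e_bound (R : realType) t : (0 < t)%N ->
  ((t.+1%:R / t%:R) ^+ t : R) <= expR 1.
Proof.
move=> ht.
have e : (t.+1%:R / t%:R : R) = 1 + t%:R^-1.
  by rewrite -[t.+1]addn1 natrD mulrDl mulfV ?pnatr_eq0 -?lt0n // mul1r.
rewrite e.
have -> : (expR 1 : R) = expR (t%:R^-1) ^+ t.
  by rewrite -expRM_natl mulfV // pnatr_eq0 -lt0n.
apply: lerXn2r; rewrite ?nnegrE ?addr_ge0 ?invr_ge0 ?ler0n ?expR_ge0 //.
exact: expR_ge1Dx.
Qed.

End Limits.

Unset Implicit Arguments.

Theorem theorem1p5 (R : realType) (d : nat) (hd : (1 < d)%N) :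
  (forall s : nat, (2 <= s <= 2 ^ d)%N ->
     lam R d s <= (s%:R / s.-1%:R) ^+ s.-1 * lam R d s.-1 /\
     (s%:R / s.-1%:R) ^+ s.-1 * lam R d s.-1 <= expR 1 * lam R d s.-1) /\
  (forall s : nat, (s <= 2 ^ d - 2)%N ->
     lam R d s <= ((2 ^ d - s)%:R / (2 ^ d - s).-1%:R) ^+ (2 ^ d - s).-1
                    * lam R d s.+1 /\
     ((2 ^ d - s)%:R / (2 ^ d - s).-1%:R) ^+ (2 ^ d - s).-1 * lam R d s.+1
       <= expR 1 * lam R d s.+1).
Proof.
have part1 : forall s : nat, (2 <= s <= 2 ^ d)%N ->
     lam R d s <= (s%:R / s.-1%:R) ^+ s.-1 * lam R d s.-1 /\
     (s%:R / s.-1%:R) ^+ s.-1 * lam R d s.-1 <= expR 1 * lam R d s.-1.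
  move=> s /andP [h2 _]; case: s h2 => [|t] // ht /=.
  split.
    by apply: lam_le => n; apply: lamN_step.
  by apply: ler_wpM2r; [exact: lam_ge0 | exact: e_bound].
split; first exact: part1.
move=> s hs.
have X0 : (0 < 2 ^ d)%N by rewrite expn_gt0.
have hs0 : (s <= 2 ^ d)%N by move: hs X0; move: (2 ^ d)%N => X; lia.
have hs1 : (s.+1 <= 2 ^ d)%N by move: hs X0; move: (2 ^ d)%N => X; lia.
rewrite (lam_compl R hs0) (lam_compl R hs1) subnS.
apply: part1.
have X2 : (2 <= 2 ^ d)%N by rewrite -{1}(expn1 2) leq_pexp2l // ltnW.
by move: hs X2; move: (2 ^ d)%N => X; lia.
Qed.
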